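(* Let $n\ge 3$ and let $A$ be a real nonsingular tridiagonal $n\times n$ matrix with diagonal entries $A_{i,i}=b_i$, subdiagonal entries $A_{i+1,i}=a_i$ and superdiagonal entries $A_{i,i+1}=c_i$. Suppose $A$ is diagonally dominant by rows: $$|b_1|\ge |c_1|,\qquad |b_i|\ge |a_{i-1}|+|c_i|\ (i=2,\dots,n-1),\qquad |b_n|\ge |a_{n-1}|,$$ with strict inequality in at least one of these inequalities. Then for every integer $k$ with $1<k<n$, the solutions $\mathbf Z^L_k$ of $B^L_k\mathbf Z^L_k=\mathbf e^L$ and $\mathbf Z^R_k$ of $B^R_k\mathbf Z^R_k=\mathbf e^R$ satisfy $\max_m|(\mathbf Z^L_k)_m|\le 1$ and $\max_m|(\mathbf Z^R_k)_m|\le 1$.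
   Context: For $1\le k\le n$: $B^L_k$ is the $k\times k$ matrix whose rows $1,\dots,k-1$ are rows $1,\dots,k-1$ of $A$ restricted to columns $1,\dots,k$, and whose last row is $(0,\dots,0,1)$; $\mathbf e^L=(0,\dots,0,1)^{\mathrm T}\in\mathbb R^k$. $B^R_k$ is the $(n-k+1)\times(n-k+1)$ matrix with rows and columns indexed by $k,\dots,n$, whose row $k$ is $(1,0,\dots,0)$ and whose row $m$ ($m=k+1,\dots,n$) is row $m$ of $A$ restricted to columns $k,\dots,n$; $\mathbf e^R=(1,0,\dots,0)^{\mathrm T}\in\mathbb R^{n-k+1}$. The paper calls its dichotomy algorithm ''stable'' exactly when these bounds hold for the vectors it uses. *)

(* Defs.v *)
From HB Require Import structures.
From mathcomp Require Import all_boot all_order all_algebra.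
Set Implicit Arguments. Unset Strict Implicit. Unset Printing Implicit Defensive.
Import Order.TTheory GRing.Theory Num.Theory.
Local Open Scope ring_scope.

(* Entry of an n x n matrix at 0-based natural indices (0 outside range). *)
Definition Aat (R : ringType) (n : nat) (A : 'M[R]_n) (i j : nat) : R :=
  match @insub nat (fun x => (x < n)%N) 'I_n i, @insub nat (fun x => (x < n)%N) 'I_n j with
  | Some i', Some j' => A i' j'
  | _, _ => 0
  end.

Definition tridiagonal (R : ringType) (n : nat) (A : 'M[R]_n) : Prop :=
  forall i j : 'I_n, (i.+1 < j)%N || (j.+1 < i)%N -> A i j = 0.

Definition row_diag_dominant (R : numDomainType) (n : nat) (A : 'M[R]_n) : Prop :=
  forall i : 'I_n, \sum_(j < n | j != i) `|A i j| <= `|A i i|.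

Definition some_row_strict (R : numDomainType) (n : nat) (A : 'M[R]_n) : Prop :=
  exists i : 'I_n, \sum_(j < n | j != i) `|A i j| < `|A i i|.

(* k is 1-based as in the paper.
   B^L_k (k x k): rows 1..k-1 = rows 1..k-1 of A on columns 1..k; last row (0,..,0,1).
   In 0-based local indices: row i < k-1 is A i j, row k-1 is e_{k-1}. *)
Definition BL (R : ringType) (n : nat) (A : 'M[R]_n) (k : nat) : 'M[R]_k :=
  \matrix_(i < k, j < k)
    if (i < k.-1)%N then Aat A i j else (if j == k.-1 :> nat then 1 else 0).

Definition eL (R : ringType) (k : nat) : 'cV[R]_k :=
  \col_(i < k) (if i == k.-1 :> nat then 1 else 0).

(* B^R_k ((n-k+1) x (n-k+1)), rows/columns indexed k..n (1-based), i.e.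
   local index i <-> global 0-based index (k-1)+i. First row (1,0,..,0);
   row m (m = k+1..n) = row m of A restricted to columns k..n. *)
Definition BR (R : ringType) (n : nat) (A : 'M[R]_n) (k : nat) : 'M[R]_(n - k + 1) :=
  \matrix_(i < n - k + 1, j < n - k + 1)
    if i == 0 :> nat then (if j == 0 :> nat then 1 else 0)
    else Aat A (k.-1 + i) (k.-1 + j).

Definition eR (R : ringType) (m : nat) : 'cV[R]_m :=
  \col_(i < m) (if i == 0 :> nat then 1 else 0).

(* Main.v *)
Require Import Defs.
From HB Require Import structures.
From mathcomp Require Import all_boot all_order all_algebra.
Import Order.TTheory GRing.Theory Num.Theory.
Local Open Scope ring_scope.

Lemma exmax (R : realDomainType) (n : nat) (f : 'I_n -> R) (i0 : 'I_n) :
  exists i, forall j, f j <= f i.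
Proof.
case: (@arg_maxP _ R _ i0 predT f erefl) => i _ H.
by exists i => j; apply: H.
Qed.

Lemma L1 (R : fieldType) n (A : 'M[R]_n) (S : {set 'I_n}) (x : 'cV[R]_n) :
  A \in unitmx -> (forall i j, i \in S -> j \notin S -> A i j = 0) ->
  (forall j, j \notin S -> x j 0 = 0) ->
  (forall i, i \in S -> (A *m x) i 0 = 0) -> x = 0.
Proof.
move=> Au HA Hx HAx.
have key : forall G : 'I_n -> R, (forall s, s \notin S -> G s = 0) ->
   \sum_(s < n) G s = \sum_(t < #|S|) G (enum_val t).
  move=> G HG; rewrite (bigID (mem S)) /= [X in _ + X]big1 ?addr0.
    exact: big_enum_val.
  by move=> s Hs; apply: HG.
pose B := \matrix_(i < #|S|, j < #|S|) A (enum_val i) (enum_val j).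
pose D := \matrix_(i < #|S|, j < #|S|) invmx A (enum_val i) (enum_val j).
pose y := \col_(i < #|S|) x (enum_val i) 0.
have BD : B *m D = 1%:M.
  apply/matrixP => i j; rewrite !mxE.
  under eq_bigr do rewrite !mxE.
  rewrite -(key (fun s => A (enum_val i) s * invmx A s (enum_val j))); last first.
    by move=> s Hs; rewrite HA ?mul0r //; apply: enum_valP.
  have := congr1 (fun M : 'M[R]_n => M (enum_val i) (enum_val j)) (mulmxV Au).
  rewrite !mxE /= => ->.
  by rewrite (inj_eq enum_val_inj).
have By : B *m y = 0.
  apply/matrixP => i j; rewrite !mxE (ord1 j).
  under eq_bigr do rewrite !mxE.
  rewrite -(key (fun s => A (enum_val i) s * x s 0)); last first.
    by move=> s Hs; rewrite Hx ?mulr0.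
  by have := HAx _ (enum_valP i); rewrite mxE.
have y0 : y = 0 by rewrite -[y]mul1mx -(mulmx1C BD) -mulmxA By mulmx0.
apply/matrixP => j k; rewrite (ord1 k) mxE.
case: (boolP (j \in S)) => Hj; last exact: Hx.
have := congr1 (fun M : 'cV[R]_#|S| => M (enum_rank_in Hj j) 0) y0.
by rewrite !mxE enum_rankK_in.
Qed.
Lemma L2 (R : realFieldType) n (A : 'M[R]_n) (x : 'cV[R]_n) (i : 'I_n) :
  \sum_(j < n | j != i) `|A i j| <= `|A i i| ->
  (A *m x) i 0 = 0 -> (forall j, `|x j 0| <= `|x i 0|) ->
  forall j, A i j != 0 -> `|x j 0| = `|x i 0|.
Proof.
move=> Hd HAx Hm j Hj.
case: (eqVneq j i) => [-> //|ji].
set M := `|x i 0|.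
have E : A i i * x i 0 = - \sum_(j < n | j != i) A i j * x j 0.
  apply/eqP; rewrite -subr_eq0 opprK; apply/eqP.
  by move: HAx; rewrite mxE (bigD1 i) //=.
have H1 : `|A i i| * M <= \sum_(j < n | j != i) `|A i j| * `|x j 0|.
  rewrite /M -normrM E normrN.
  apply: le_trans (ler_norm_sum _ _ _) _.
  by rewrite le_eqVlt; apply/orP; left; apply/eqP; apply: eq_bigr => k _; exact: normrM.
have H2 : \sum_(j < n | j != i) `|A i j| * M <= `|A i i| * M.
  by rewrite -mulr_suml; apply: ler_wpM2r => //; rewrite /M normr_ge0.
have H3 : \sum_(j < n | j != i) `|A i j| * (M - `|x j 0|) = 0.
  apply/eqP; rewrite eq_le; apply/andP; split.
    under eq_bigr do rewrite mulrBr.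
    rewrite sumrB subr_le0; exact: le_trans H2 H1.
  by apply: sumr_ge0 => k _; rewrite mulr_ge0 // subr_ge0.
have Hnn : forall k : 'I_n, k != i -> 0 <= `|A i k| * (M - `|x k 0|).
  by move=> k _; rewrite mulr_ge0 // subr_ge0.
have /eqP := psumr_eq0P Hnn H3 ji.
by rewrite mulf_eq0 normr_eq0 (negbTE Hj) /= subr_eq0 => /eqP <-.
Qed.

Lemma L3 (R : realFieldType) n (A : 'M[R]_n) (x : 'cV[R]_n) (p : 'I_n) :
  A \in unitmx -> row_diag_dominant A ->
  (forall j, j != p -> x j 0 = 0 \/ (A *m x) j 0 = 0) ->
  forall j, `|x j 0| <= `|x p 0|.
Proof.
move=> Au Hd Hz.
have [im Him] := @exmax _ _ (fun j => `|x j 0|) p.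
move=> j; apply: le_trans (Him j) _.
rewrite leNgt; apply/negP => Hlt.
set M := `|x im 0| in Him Hlt.
have M0 : 0 < M by apply: le_lt_trans Hlt.
pose S := [set j | `|x j 0| == M].
have HS : forall i, i \in S -> (A *m x) i 0 = 0.
  move=> i; rewrite inE => /eqP Hi.
  have ip : i != p by apply/eqP => E; move: Hlt; rewrite -E Hi ltxx.
  case: (Hz i ip) => // H0; move: M0; by rewrite -Hi H0 normr0 ltxx.
have HA : forall i j, i \in S -> j \notin S -> A i j = 0.
  move=> i k Hi Hk; apply/eqP; apply/negPn/negP => Hne.
  move: (Hi) Hk; rewrite !inE => /eqP Hi'.
  have Hm : forall l, `|x l 0| <= `|x i 0| by move=> l; rewrite Hi' Him.
  by rewrite (@L2 _ _ A x i (Hd i) (HS i Hi) Hm k Hne) Hi' eqxx.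
pose x' := \col_(j < n) (if j \in S then x j 0 else 0).
have x'0 : x' = 0.
  apply: (@L1 _ _ A S x' Au HA).
    by move=> k Hk; rewrite mxE (negbTE Hk).
  move=> i Hi; rewrite -(HS i Hi) !mxE; apply: eq_bigr => k _; rewrite mxE.
  by case: ifP => // /negbT Hk; rewrite HA // !mulr0 mul0r.
have := congr1 (fun N : 'cV[R]_n => N im 0) x'0.
rewrite !mxE inE eqxx => E; move: M0; by rewrite /M E normr0 ltxx.
Qed.

Lemma unit_of_inj (R : fieldType) m (M : 'M[R]_m) :
  (forall Z : 'cV[R]_m, M *m Z = 0 -> Z = 0) -> M \in unitmx.
Proof.
move=> H; rewrite -unitmx_tr -row_free_unit; apply: inj_row_free => v Hv.
have : M *m v^T = 0 by rewrite -[M]trmxK -trmx_mul Hv trmx0.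
by move/H => /(congr1 trmx); rewrite trmxK trmx0.
Qed.

From mathcomp Require Import zify.
Set Implicit Arguments. Unset Strict Implicit.

Lemma AatE (R : ringType) n (A : 'M[R]_n) (i j : 'I_n) : Aat A i j = A i j.
Proof.
rewrite /Aat; case: insubP => [i' _ Ei|]; last by rewrite ltn_ord.
case: insubP => [j' _ Ej|]; last by rewrite ltn_ord.
by congr (A _ _); apply: val_inj.
Qed.

Definition extv (R : ringType) m (Z : 'cV[R]_m) (j : nat) : R :=
  match @insub nat (fun x => (x < m)%N) 'I_m j with
  | Some j' => Z j' 0 | None => 0 end.

Lemma extvE (R : ringType) m (Z : 'cV[R]_m) (j : 'I_m) : extv Z j = Z j 0.
Proof.
rewrite /extv; case: insubP => [j' _ Ej|]; last by rewrite ltn_ord.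
by congr (Z _ _); apply: val_inj.
Qed.

Lemma extv0 (R : ringType) m (Z : 'cV[R]_m) (j : nat) : (m <= j)%N -> extv Z j = 0.
Proof.
by move=> H; rewrite /extv; case: insubP => [j' Hj _|//]; move: Hj; rewrite ltnNge H.
Qed.

Lemma sum_widen (R : ringType) (F : nat -> R) k n : (k <= n)%N ->
  (forall j, (k <= j)%N -> F j = 0) -> \sum_(j < n) F j = \sum_(j < k) F j.
Proof.
move=> Hkn HF; symmetry; rewrite (big_ord_widen n F Hkn) big_mkcond; apply: eq_bigr => j _.
by case: ifP => // /negbT; rewrite -leqNgt => /HF.
Qed.

Lemma sum_shift (R : ringType) (F : nat -> R) a n : (a <= n)%N ->
  (forall j, (j < a)%N -> F j = 0) -> \sum_(j < n) F j = \sum_(j < (n - a)%N) F (j + a)%N.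
Proof.
move=> Ha HF; rewrite -!(big_mkord xpredT) (@big_cat_nat _ _ _ a 0 n xpredT F (leq0n a) Ha) /=.
rewrite [X in X + _]big_nat_cond big1 ?add0r; last first.
  by move=> j /andP[/andP[_ Hj] _]; exact: HF.
by rewrite -{1}(add0n a) big_addn big_mkord.
Qed.

Lemma BLcore (R : realFieldType) n (A : 'M[R]_n) k (c : R) (Z : 'cV[R]_k) :
  (1 < k)%N -> (k < n)%N -> A \in unitmx -> row_diag_dominant A ->
  BL A k *m Z = c *: eL R k -> forall m : 'I_k, `|Z m 0| <= `|c|.
Proof.
move=> k1 kn Au Hd HZ.
have k1n : (k.-1 < n)%N by lia.
have k1k : (k.-1 < k)%N by lia.
pose p : 'I_n := Ordinal k1n.
pose x : 'cV[R]_n := \col_(j < n) extv Z j.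
have Ax : forall g : 'I_n, (A *m x) g 0 = \sum_(j < k) Aat A g j * extv Z j.
  move=> g; rewrite mxE.
  rewrite (eq_bigr (fun j : 'I_n => Aat A g j * extv Z j)); last first.
    by move=> j _; rewrite AatE mxE.
  apply: (sum_widen (F := fun j => Aat A g j * extv Z j)); first exact: ltnW.
  by move=> j Hj; rewrite extv0 ?mulr0.
have rowZ : forall i : 'I_k, (BL A k *m Z) i 0 = \sum_(j < k)
    (if (i < k.-1)%N then Aat A i j else (if j == k.-1 :> nat then 1 else 0)) * extv Z j.
  by move=> i; rewrite mxE; apply: eq_bigr => j _; rewrite mxE extvE.
have Hz : forall j, j != p -> x j 0 = 0 \/ (A *m x) j 0 = 0.
  move=> j jp; case: (ltnP j k.-1) => Hj.
    right; have jk : (j < k)%N by lia.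
    rewrite Ax; have := rowZ (Ordinal jk); rewrite HZ !mxE /= Hj ifF ?mulr0; last first.
      by apply/negbTE; rewrite neq_ltn Hj.
    by move/esym.
  left; rewrite mxE extv0 //.
  have : (j : nat) != k.-1 by move: jp; apply: contra => /eqP E; apply/eqP/val_inj.
  lia.
have xp : x p 0 = c.
  have := rowZ (Ordinal k1k); rewrite HZ !mxE /= ltnn eqxx mulr1 => ->.
  rewrite (bigD1 (Ordinal k1k)) //= eqxx mul1r big1 ?addr0 ?mxE //.
  move=> j Hj; rewrite ifF ?mul0r //; apply/negbTE.
  by move: Hj; apply: contra => /eqP E; apply/eqP/val_inj.
move=> m; have mn : (m < n)%N by apply: ltn_trans kn.
have := @L3 _ _ A x p Au Hd Hz (Ordinal mn).
by rewrite xp !mxE /= (extvE Z m).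
Qed.

Lemma BRcore (R : realFieldType) n (A : 'M[R]_n) k (c : R) (Z : 'cV[R]_(n - k + 1)%N) :
  (1 < k)%N -> (k < n)%N -> A \in unitmx -> row_diag_dominant A ->
  BR A k *m Z = c *: eR R (n - k + 1)%N -> forall m : 'I_(n - k + 1)%N, `|Z m 0| <= `|c|.
Proof.
move=> k1 kn Au Hd HZ.
have k1n : (k.-1 < n)%N by lia.
have N0 : (0 < n - k + 1)%N by lia.
pose p : 'I_n := Ordinal k1n.
pose xf := fun j : nat => if (k.-1 <= j)%N then extv Z (j - k.-1)%N else 0.
pose x : 'cV[R]_n := \col_(j < n) xf j.
have Ax : forall g : 'I_n, (A *m x) g 0 =
    \sum_(j < n - k + 1) Aat A g (k.-1 + j)%N * extv Z j.
  move=> g; rewrite mxE.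
  rewrite (eq_bigr (fun j : 'I_n => Aat A g j * xf j)); last first.
    by move=> j _; rewrite AatE mxE.
  rewrite (sum_shift (F := fun j => Aat A g j * xf j) (a := k.-1)); last first.
      by move=> j Hj; rewrite /xf leqNgt Hj mulr0.
    exact: ltnW.
  have -> : (n - k.-1 = n - k + 1)%N by lia.
  apply: eq_bigr => j _; rewrite /xf leq_addl addnK addnC //.
have rowZ : forall i : 'I_(n - k + 1)%N, (BR A k *m Z) i 0 = \sum_(j < n - k + 1)
    (if i == 0 :> nat then (if j == 0 :> nat then 1 else 0)
     else Aat A (k.-1 + i)%N (k.-1 + j)%N) * extv Z j.
  by move=> i; rewrite mxE; apply: eq_bigr => j _; rewrite mxE extvE.
have Hz : forall j, j != p -> x j 0 = 0 \/ (A *m x) j 0 = 0.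
  move=> j jp; case: (ltnP j k.-1) => Hj.
    by left; rewrite mxE /xf leqNgt Hj.
  have jne : (j : nat) != k.-1 by move: jp; apply: contra => /eqP E; apply/eqP/val_inj.
  right; have jk : (j - k.-1 < n - k + 1)%N by have := ltn_ord j; lia.
  rewrite Ax; have := rowZ (Ordinal jk); rewrite HZ !mxE /= ifF; last by apply/negbTE; lia.
  rewrite mulr0 => H0; apply: (etrans _ (esym H0)).
  apply: eq_bigr => l _ /=.
  have E : (k.-1 + (j - k.-1))%N = j by lia.
  rewrite ifF; last by apply/negbTE; lia.
  by congr (Aat _ _ _ * _); exact/esym/E.
have xp : x p 0 = c.
  have := rowZ (Ordinal N0); rewrite HZ !mxE /= mulr1 => ->.
  rewrite /xf leqnn subnn.
  rewrite (bigD1 (Ordinal N0)) //=.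
  rewrite mul1r big1 ?addr0 //.
  move=> j Hj; rewrite ifF ?mul0r //; apply/negbTE.
  by move: Hj; apply: contra => /eqP E; apply/eqP/val_inj.
move=> m; have mn : (k.-1 + m < n)%N by have := ltn_ord m; lia.
have := @L3 _ _ A x p Au Hd Hz (Ordinal mn).
by rewrite xp !mxE /xf /= leq_addr addKn (extvE Z m).
Qed.

Theorem theorem4 (R : realFieldType) (n : nat) (A : 'M[R]_n) :
  (3 <= n)%N ->
  A \in unitmx ->
  tridiagonal A ->
  row_diag_dominant A ->
  some_row_strict A ->
  forall k : nat, (1 < k)%N -> (k < n)%N ->
    [/\ BL A k \in unitmx,
        BR A k \in unitmx,
        (forall Z : 'cV[R]_k, BL A k *m Z = eL R k ->
           forall m : 'I_k, `|Z m 0| <= 1)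
      & (forall Z : 'cV[R]_(n - k + 1), BR A k *m Z = eR R (n - k + 1) ->
           forall m : 'I_(n - k + 1), `|Z m 0| <= 1)].
Proof.
move=> _ Au _ Hd _ k k1 kn; split.
- apply: unit_of_inj => Z HZ; apply/matrixP => i j; rewrite (ord1 j) mxE.
  apply/eqP; rewrite -normr_le0 -(normr0 R).
  by apply: (BLcore (A := A) (c := 0)) => //; rewrite HZ scale0r.
- apply: unit_of_inj => Z HZ; apply/matrixP => i j; rewrite (ord1 j) mxE.
  apply/eqP; rewrite -normr_le0 -(normr0 R).
  by apply: (BRcore (A := A) (c := 0)) => //; rewrite HZ scale0r.
- move=> Z HZ m; rewrite -(normr1 R).
  by apply: (BLcore (A := A) (c := 1)) => //; rewrite HZ scale1r.
- move=> Z HZ m; rewrite -(normr1 R).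
  by apply: (BRcore (A := A) (c := 1)) => //; rewrite HZ scale1r.
Qed.
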